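(* Consider the problem of minimizing $\pmb{c}^T\pmb{x}$ subject to $\pmb{x}\in\mathbb{X}$ and, for each $r\in[m]$, the constraint $$\max_{\pmb{p}\in\mathcal{P}(\pi_r)}\sum_{i\in[K_r]}p_i\,(\pmb{a}^{r}_i)^T\pmb{x}\le b_r,$$ where for each $r$, $\pmb{a}^r_1,\dots,\pmb{a}^r_{K_r}\in\mathbb{R}^n$ are scenarios and $\pi_r:[K_r]\to[0,1]$ is a possibility distribution with $\pi_r(1)\ge\dots\ge\pi_r(K_r)$, $\pi_r(1)=1$. If $\mathbb{X}\subseteq\mathbb{R}^n$ is a polyhedron described by a finite system of linear constraints, then this problem is equivalent to a linear programming problem (in the variables $\pmb{x}$ together with auxiliary variables $\beta^r\in\mathbb{R}$, $\alpha^r_j\ge 0$), whose size is polynomial in $n$, $m$, $\sum_r K_r$ and the size of the description of $\mathbb{X}$.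
   Context: $\pmb{c}\in\mathbb{R}^n$, $\pmb{b}\in\mathbb{R}^m$. For a possibility distribution $\pi:[K]\to[0,1]$, $\mathcal{P}(\pi)$ denotes the set of all $\pmb{p}\in\mathbb{R}^K$ with $p_i\ge0$, $\sum_{i\in[K]}p_i=1$, and $\sum_{i\in A}p_i\ge 1-\max_{i\notin A}\pi(i)$ for every nonempty $A\subsetneq[K]$ (the set of probability distributions on the scenario indices consistent with $\pi$, i.e. dominating the necessity measure induced by $\pi$). *)

(* Defs.v *)
From HB Require Import structures.
From mathcomp Require Import all_boot all_order all_algebra.
From mathcomp Require Import reals.
Set Implicit Arguments. Unset Strict Implicit. Unset Printing Implicit Defensive.
Import Order.TTheory GRing.Theory Num.Theory.
Local Open Scope ring_scope.

Definition lemx (R : realType) (p q : nat) (A B : 'M[R]_(p, q)) : Prop :=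
  forall i j, A i j <= B i j.

(* pi : [K] -> [0,1] is a possibility distribution, sorted nonincreasingly,
   with pi(1) = 1 (index 1 of the paper is ordinal 0 here). *)
Definition sorted_possibility (R : realType) (K : nat) (pi : 'I_K -> R) : Prop :=
  (forall i, 0 <= pi i <= 1) /\
  (forall i j : 'I_K, (i <= j)%N -> pi j <= pi i) /\
  (forall i : 'I_K, val i = 0%N -> pi i = 1).

(* P(pi): probability vectors dominating the necessity measure of pi.
   For nonempty proper A, ~:A is nonempty and pi >= 0, so the big max with
   neutral element 0 is the max of pi over the complement of A. *)
Definition in_P (R : realType) (K : nat) (pi : 'I_K -> R) (p : 'I_K -> R) : Prop :=
  (forall i, 0 <= p i) /\
  (\sum_i p i = 1) /\
  (forall A : {set 'I_K}, A != set0 -> A != setT ->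
     \sum_(i in A) p i >= 1 - \big[Num.max/0]_(i in ~: A) pi i).

Definition robust_feasible (R : realType) (n m q : nat)
  (D : 'M[R]_(q, n)) (d : 'cV[R]_q)
  (K : 'I_m -> nat) (a : forall r : 'I_m, 'I_(K r) -> 'rV[R]_n)
  (pi : forall r : 'I_m, 'I_(K r) -> R) (b : 'I_m -> R) (x : 'cV[R]_n) : Prop :=
  lemx (D *m x) d /\
  forall r : 'I_m, forall p : 'I_(K r) -> R, in_P (pi r) p ->
    \sum_(i < K r) p i * (a r i *m x) 0 0 <= b r.

(* Main.v *)
Require Import Defs.
From HB Require Import structures.
From mathcomp Require Import all_boot all_order all_algebra.
From mathcomp Require Import reals.
From mathcomp Require Import lra.
From Stdlib Require Import ClassicalEpsilon.
Set Implicit Arguments. Unset Strict Implicit. Unset Printing Implicit Defensive.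
Import Order.TTheory GRing.Theory Num.Theory.
Local Open Scope ring_scope.

Definition dl (R : realType) (t : nat -> R) (l : nat) : R :=
  t l - (if l is l'.+1 then t l' else 0).

Lemma telesc (R : realType) (t : nat -> R) k : \sum_(0 <= l < k.+1) dl t l = t k.
Proof.
elim: k => [|k IH]; first by rewrite big_nat1 /dl subr0.
by rewrite big_nat_recr //= IH /dl addrC subrK.
Qed.

Definition Pn (R : realType) K (pi : 'I_K -> R) (k : nat) : R :=
  if insub k is Some i then pi i else 0.
Definition wgt (R : realType) K (pi : 'I_K -> R) (j : 'I_K) : R :=
  Pn pi j - Pn pi j.+1.
Definition prev K (j : 'I_K) : 'I_K :=
  Ordinal (leq_ltn_trans (leq_pred j) (ltn_ord j)).

Lemma Pn_lt (R : realType) K (pi : 'I_K.+1 -> R) k : (k < K.+1)%N -> Pn pi k = pi (inord k).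
Proof.
move=> hk; rewrite /Pn insubT; congr (pi _); apply: val_inj; by rewrite /= inordK.
Qed.

Lemma Pn_ge (R : realType) K (pi : 'I_K -> R) k : (K <= k)%N -> Pn pi k = 0.
Proof. by move=> hk; rewrite /Pn insubF // ltnNge hk. Qed.

Lemma sum_ord_nat (R : realType) K (F : 'I_K.+1 -> R) :
  \sum_(i < K.+1) F i = \sum_(0 <= i < K.+1) F (inord i).
Proof. by rewrite big_mkord; apply: eq_bigr => i _; rewrite inord_val. Qed.

Lemma wgt_ge0 (R : realType) K (pi : 'I_K -> R) : sorted_possibility pi ->
  forall j, 0 <= wgt pi j.
Proof.
case=> h01 [hs _] j; rewrite /wgt subr_ge0.
have -> : Pn pi j = pi j by rewrite /Pn valK.
case: (ltnP j.+1 K) => hj.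
  by rewrite /Pn insubT; apply: hs => /=.
by rewrite Pn_ge //; case/andP: (h01 j).
Qed.

Lemma sum_wgt_from (R : realType) K (pi : 'I_K.+1 -> R) l : (l <= K.+1)%N ->
  \sum_(l <= i < K.+1) wgt pi (inord i) = Pn pi l.
Proof.
move=> hl.
rewrite (@telescope_sumr_eq _ _ _ (fun k => - Pn pi k)) //.
  by rewrite Pn_ge // oppr0 sub0r opprK.
move=> k /andP[_ hk]; rewrite /wgt inordK // opprK addrC.
by [].
Qed.

Lemma abel (R : realType) (q t : nat -> R) K :
  \sum_(0 <= i < K) q i * t i = \sum_(0 <= l < K) dl t l * \sum_(l <= i < K) q i.
Proof.
elim: K => [|K IH]; first by rewrite !big_geq.
rewrite big_nat_recr //= IH [in RHS]big_nat_recr //= big_nat1.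
rewrite [X in _ = X + _](@eq_big_nat _ _ _ 0 K _ (fun l => dl t l * \sum_(l <= i < K) q i + dl t l * q K)); last first.
  by move=> l /andP[_ lK]; rewrite big_nat_recr ?mulrDr //= ltnW.
rewrite big_split /= -addrA; congr (_ + _).
rewrite -mulr_suml -mulrDl -big_nat_recr //= telesc.
by rewrite mulrC.
Qed.

Lemma tail_bound (R : realType) K (pi : 'I_K.+1 -> R) (hpi : sorted_possibility pi)
  (p : 'I_K.+1 -> R) l : in_P pi p -> (0 < l < K.+1)%N ->
  \sum_(l <= i < K.+1) p (inord i) <= pi (inord l).
Proof.
case: hpi => h01 [hs h0] [hp0 [hp1 hpA]] /andP[l0 lK].
set A := [set i : 'I_K.+1 | (i < l)%N].
have hA0 : A != set0 by apply/set0Pn; exists ord0; rewrite inE.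
have hAT : A != setT.
  apply/negP => /eqP HA; have : (inord l : 'I_K.+1) \in A by rewrite HA inE.
  by rewrite inE inordK // ltnn.
have HM : \big[Num.max/0]_(i in ~: A) pi i <= pi (inord l).
  apply: bigmax_le; first by case/andP: (h01 (inord l)).
  move=> i; rewrite !inE -leqNgt => hi; apply: hs; by rewrite inordK.
have := hpA A hA0 hAT.
have -> : \sum_(i in A) p i = \sum_(i < K.+1 | (i < l)%N) p i.
  by apply: eq_bigl => i; rewrite inE.
have E1 : \sum_i p i = \sum_(i < K.+1 | (i < l)%N) p i + \sum_(i < K.+1 | ~~ (i < l)%N) p i.
  exact: bigID.
have -> : \sum_(l <= i < K.+1) p (inord i) = \sum_(i < K.+1 | ~~ (i < l)%N) p i.
  rewrite big_geq_mkord; apply: eq_big => i; first by rewrite -leqNgt.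
  by rewrite inord_val.
rewrite hp1 in E1.
move=> H; apply: le_trans HM.
rewrite (_ : \sum_(i < K.+1 | ~~ (i < l)%N) p i = 1 - \sum_(i < K.+1 | (i < l)%N) p i); last first.
  by rewrite E1 addrC addKr.
by rewrite lerBlDr addrC -lerBlDr.
Qed.

Lemma dir1 (R : realType) K (pi : 'I_K.+1 -> R) (hpi : sorted_possibility pi)
  (v t p : 'I_K.+1 -> R) :
  in_P pi p -> (forall j, v j <= t j) -> (forall j, t (prev j) <= t j) ->
  \sum_i p i * v i <= \sum_j wgt pi j * t j.
Proof.
move=> hp hvt ht.
have hp' := hp; case: hp' => hp0 [hp1 _].
apply: (@le_trans _ _ (\sum_i p i * t i)).
  by apply: ler_sum => i _; apply: ler_wpM2l.
rewrite !sum_ord_nat (abel (fun i => p (inord i)) (fun i => t (inord i))).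
rewrite (abel (fun i => wgt pi (inord i)) (fun i => t (inord i))).
apply: ler_sum_nat => l /andP[_ hl].
rewrite (sum_wgt_from pi (ltnW hl)) (Pn_lt pi hl).
case: l hl => [|l] hl.
  rewrite -(sum_ord_nat p) hp1.
  case: hpi => _ [_ h0]; rewrite (h0 (inord 0)); [exact: lexx | exact: (inordK (ltn0Sn K))].
apply: ler_wpM2l.
  rewrite /dl subr_ge0.
  have := ht (inord l.+1).
  have -> : prev (inord l.+1 : 'I_K.+1) = inord l.
    by apply: val_inj; rewrite /= !inordK // ltnW.
  by [].
exact: tail_bound.
Qed.

Fixpoint gn (R : realType) (vn : nat -> R) (j : nat) : nat :=
  match j with 0 => 0%N | j'.+1 => if vn (gn vn j') < vn j'.+1 then j'.+1 else gn vn j' end.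

Lemma gn_le (R : realType) (vn : nat -> R) j : (gn vn j <= j)%N.
Proof.
elim: j => [//|j IH] /=; case: ifP => // _; exact: leqW.
Qed.

Lemma gn_ge (R : realType) (vn : nat -> R) j : vn j <= vn (gn vn j).
Proof.
case: j => [//|j] /=; case: ifP => [_ //|/negbT]; by rewrite -leNgt.
Qed.

Lemma gn_mono (R : realType) (vn : nat -> R) j : vn (gn vn j) <= vn (gn vn j.+1).
Proof.
rewrite /=; case: ifP => [/ltW //|_ //].
Qed.

Lemma pstar_sum (R : realType) K (pi : 'I_K.+1 -> R) (vn : nat -> R) (f : 'I_K.+1 -> R) :
  \sum_(i : 'I_K.+1) (\sum_(j < K.+1) wgt pi j * (gn vn j == i :> nat)%:R) * f i =
  \sum_(j < K.+1) wgt pi j * f (inord (gn vn j)).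
Proof.
under eq_bigr do rewrite mulr_suml.
rewrite exchange_big /=; apply: eq_bigr => j _.
have hj : (gn vn j < K.+1)%N by apply: leq_ltn_trans (gn_le _ _) (ltn_ord j).
rewrite (bigD1 (inord (gn vn j))) //= inordK // eqxx mulr1 big1 ?addr0 // => i hi.
have -> : (gn vn j == i) = false.
  apply/negbTE; apply: contra hi => /eqP ->; by rewrite inord_val.
by rewrite mulr0 mul0r.
Qed.

Lemma sum_wgt_all (R : realType) K (pi : 'I_K.+1 -> R) (hpi : sorted_possibility pi) :
  \sum_j wgt pi j = 1.
Proof.
rewrite sum_ord_nat (sum_wgt_from pi (leq0n _)) (Pn_lt pi (ltn0Sn K)).
case: hpi => _ [_ h0]; exact: (h0 (inord 0) (inordK (ltn0Sn K))).
Qed.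

Lemma sum_wgt_lt (R : realType) K (pi : 'I_K.+1 -> R) (hpi : sorted_possibility pi) k :
  (k < K.+1)%N -> \sum_(j < K.+1 | (j < k)%N) wgt pi j = 1 - pi (inord k).
Proof.
move=> hk.
have E1 : \sum_j wgt pi j = \sum_(j < K.+1 | (j < k)%N) wgt pi j + \sum_(j < K.+1 | ~~ (j < k)%N) wgt pi j.
  exact: bigID.
have E2 : \sum_(j < K.+1 | ~~ (j < k)%N) wgt pi j = pi (inord k).
  rewrite -(Pn_lt pi hk) -(sum_wgt_from pi (ltnW hk)) big_geq_mkord.
  apply: eq_big => i; first by rewrite -leqNgt.
  by rewrite inord_val.
rewrite (sum_wgt_all hpi) E2 in E1.
by rewrite E1 addrK.
Qed.

Lemma dir2 (R : realType) K (pi : 'I_K.+1 -> R) (hpi : sorted_possibility pi)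
  (v : 'I_K.+1 -> R) (b : R) :
  (forall p, in_P pi p -> \sum_i p i * v i <= b) ->
  exists t : 'I_K.+1 -> R, (forall j, v j <= t j) /\ (forall j, t (prev j) <= t j) /\
     \sum_j wgt pi j * t j <= b.
Proof.
move=> H.
pose vn k := v (inord k).
exists (fun j : 'I_K.+1 => vn (gn vn j)); split; [|split].
- by move=> j; have := gn_ge vn j; rewrite /vn inord_val.
- by case=> [[|j] hj] /=; [exact: lexx | exact: gn_mono].
pose ps (i : 'I_K.+1) := \sum_(j < K.+1) wgt pi j * (gn vn j == i)%:R.
have := H ps; rewrite (pstar_sum pi vn v); apply.
split; [|split].
- move=> i; apply: sumr_ge0 => j _; apply: mulr_ge0; [exact: wgt_ge0 | exact: ler0n].
- have := pstar_sum pi vn (fun _ => 1); under eq_bigr do rewrite mulr1.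
  move=> ->; under eq_bigr do rewrite mulr1; exact: sum_wgt_all.
move=> A hA0 hAT.
have [i0 Hi0] : exists i, i \notin A.
  apply/existsP; rewrite -negb_forall; apply: contra hAT => /forallP HA.
  by apply/eqP/setP => i; rewrite inE HA.
have exP : exists k, (k < K.+1)%N && ((inord k : 'I_K.+1) \notin A).
  by exists i0; rewrite ltn_ord inord_val.
case: (ex_minnP exP) => k /andP[kK kA] kmin.
apply: (@le_trans _ _ (1 - pi (inord k))).
  rewrite lerD2l lerN2; apply: le_bigmax_cond; by rewrite inE.
rewrite -(sum_wgt_lt hpi kK).
have -> : \sum_(i in A) ps i = \sum_i ps i * (i \in A)%:R.
  rewrite big_mkcond /=; apply: eq_bigr => i _.
  by case: (i \in A); rewrite ?mulr1 ?mulr0.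
rewrite (pstar_sum pi vn (fun i => (i \in A)%:R)).
rewrite [X in _ <= X](bigID (fun j : 'I_K.+1 => (j < k)%N)) /=.
rewrite -[X in X <= _]addr0; apply: lerD.
  apply: ler_sum => j hj.
  have -> : (inord (gn vn j) : 'I_K.+1) \in A.
    apply/negPn/negP => hn.
    have hg : (gn vn j < K.+1)%N by apply: leq_ltn_trans (gn_le _ _) (ltn_ord j).
    have := kmin (gn vn j); rewrite hg hn => /(_ isT) hkg.
    have := leq_ltn_trans (gn_le vn j) hj; by rewrite ltnNge hkg.
  by rewrite mulr1.
apply: sumr_ge0 => j _; apply: mulr_ge0; [exact: wgt_ge0 | exact: ler0n].
Qed.
Lemma lp_encode (R : realType) n (Y C : finType) (al : C -> 'I_n -> R)
  (ga : C -> Y -> R) (be : C -> R) :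
 exists (A : 'M[R]_(#|{:C}|, n + #|{:Y}|)) (bb : 'cV[R]_#|{:C}|), forall x : 'cV[R]_n,
  (exists y : 'cV[R]_#|{:Y}|, lemx (A *m col_mx x y) bb) <->
  exists t : Y -> R, forall c, \sum_i al c i * x i 0 + \sum_k ga c k * t k <= be c.
Proof.
exists (row_mx (\matrix_(c, i) al (enum_val c) i) (\matrix_(c,k) ga (enum_val c) (enum_val k))).
exists (\col_c be (enum_val c)) => x.
have E : forall (y : 'cV[R]_#|{:Y}|) (c : 'I_#|{:C}|), (row_mx (\matrix_(c, i) al (enum_val c) i)
   (\matrix_(c,k) ga (enum_val c) (enum_val k)) *m col_mx x y) c 0 =
   \sum_i al (enum_val c) i * x i 0 + \sum_k ga (enum_val c) (enum_val k) * y k 0.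
  move=> y c; rewrite mul_row_col mxE !mxE; by congr (_ + _); apply: eq_bigr => i _; rewrite mxE.
split.
- case=> y Hy; exists (fun k => y (enum_rank k) 0) => c.
  have := Hy (enum_rank c) 0; rewrite E mxE enum_rankK.
  congr (_ + _ <= _).
  rewrite [RHS](reindex (@enum_val Y predT)) /=; last first.
    by exists enum_rank => i _; [rewrite enum_valK | rewrite enum_rankK].
  by apply: eq_bigr => k _; rewrite enum_valK.
- case=> t Ht; exists (\col_k t (enum_val k)) => c j.
  rewrite ord1 E mxE; move: (Ht (enum_val c)).
  congr (_ + _ <= _).
  rewrite [RHS](reindex (@enum_rank Y)) /=; last first.
    by exists enum_val => i _; [rewrite enum_rankK | rewrite enum_valK].
  by apply: eq_bigr => k _; rewrite mxE enum_rankK.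
Qed.

Lemma key (R : realType) K (hK : (0 < K)%N) (pi : 'I_K -> R) (hpi : sorted_possibility pi)
  (v : 'I_K -> R) (b : R) :
  (forall p, in_P pi p -> \sum_i p i * v i <= b) <->
  exists t : 'I_K -> R, (forall j, v j <= t j) /\ (forall j, t (prev j) <= t j) /\
     \sum_j wgt pi j * t j <= b.
Proof.
case: K hK pi hpi v => // K _ pi hpi v; split; first exact: dir2.
case=> t [h1 [h2 h3]] p hp; exact: le_trans (dir1 hpi hp h1 h2) h3.
Qed.

Lemma sum_ind (R : realType) (Y : finType) (y0 : Y) (t : Y -> R) :
  \sum_z (z == y0)%:R * t z = t y0.
Proof.
rewrite (bigD1 y0) //= eqxx mul1r big1 ?addr0 // => z /negbTE ->.
by rewrite mul0r.
Qed.

Lemma sum_sig (R : realType) (I : finType) (J : I -> finType) (G : {i : I & J i} -> R) :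
  \sum_z G z = \sum_i \sum_(j : J i) G (Tagged J j).
Proof. by rewrite sig_big_dep /=; apply: eq_bigr => -[i j]. Qed.

Unset Implicit Arguments.

Theorem corollary1 (R : realType) (n m q : nat)
  (c : 'cV[R]_n) (D : 'M[R]_(q, n)) (d : 'cV[R]_q)
  (K : 'I_m -> nat) (a : forall r : 'I_m, 'I_(K r) -> 'rV[R]_n)
  (pi : forall r : 'I_m, 'I_(K r) -> R) (b : 'I_m -> R)
  (hK : forall r, (0 < K r)%N)
  (hpi : forall r, sorted_possibility (pi r)) :
  exists (N M : nat) (A : 'M[R]_(M, n + N)) (bb : 'cV[R]_M),
    (N <= m + \sum_(r < m) K r)%N /\
    (M <= q + m + 2 * \sum_(r < m) K r)%N /\
    forall x : 'cV[R]_n,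
      robust_feasible D d a pi b x <->
      exists y : 'cV[R]_N, lemx (A *m col_mx x y) bb.
Proof.
pose Y := {r : 'I_m & 'I_(K r)}.
pose C := ((('I_q + 'I_m) + Y) + Y)%type.
pose al (cc : C) : 'I_n -> R :=
  match cc with
  | inl (inl (inl i)) => fun j => D i j
  | inl (inl (inr _)) => fun _ => 0
  | inl (inr y) => fun j => a (tag y) (tagged y) 0 j
  | inr _ => fun _ => 0
  end.
pose ga (cc : C) : Y -> R :=
  match cc with
  | inl (inl (inl _)) => fun _ => 0
  | inl (inl (inr r)) => fun z => if tag z == r then wgt (pi (tag z)) (tagged z) else 0
  | inl (inr y) => fun z => - (z == y)%:R
  | inr y => fun z => (z == Tagged (fun r => 'I_(K r)) (prev (tagged y)))%:R - (z == y)%:R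
  end.
pose be (cc : C) : R :=
  match cc with
  | inl (inl (inl i)) => d i 0
  | inl (inl (inr r)) => b r
  | inl (inr _) => 0
  | inr _ => 0
  end.
have [A [bb HE]] := lp_encode al ga be.
have cardY : #|{: Y}| = (\sum_(r < m) K r)%N.
  by rewrite card_tagged sumnE big_map big_enum /=; apply: eq_bigr => r _; rewrite card_ord.
exists #|{: Y}|, #|{: C}|, A, bb; split; [|split].
- by rewrite cardY leq_addl.
- by rewrite !card_sum card_ord card_ord cardY mul2n -addnn !addnA.
move=> x; rewrite HE.
have E1 : forall (t : Y -> R) i, \sum_j al (inl (inl (inl i))) j * x j 0 + \sum_k ga (inl (inl (inl i))) k * t k
   = (D *m x) i 0.
  move=> t i /=; rewrite [X in _ + X]big1 ?addr0 ?mxE // => k _; exact: mul0r.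
have E2 : forall (t : Y -> R) r, \sum_j al (inl (inl (inr r))) j * x j 0 + \sum_k ga (inl (inl (inr r))) k * t k
   = \sum_j wgt (pi r) j * t (Tagged (fun r => 'I_(K r)) j).
  move=> t r /=; rewrite [X in X + _]big1 ?add0r; last by move=> k _; exact: mul0r.
  rewrite sum_sig (bigD1 r) //= eqxx [X in _ + X]big1 ?addr0 // => r' /negbTE hr.
  by apply: big1 => j _; rewrite /= hr mul0r.
have E3 : forall (t : Y -> R) y, \sum_j al (inl (inr y)) j * x j 0 + \sum_k ga (inl (inr y)) k * t k
   = (a (tag y) (tagged y) *m x) 0 0 - t y.
  move=> t y /=; rewrite mxE; congr (_ + _).
  under eq_bigr do rewrite mulNr.
  by rewrite sumrN sum_ind.
have E4 : forall (t : Y -> R) y, \sum_j al (inr y) j * x j 0 + \sum_k ga (inr y) k * t k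
   = t (Tagged (fun r => 'I_(K r)) (prev (tagged y))) - t y.
  move=> t y /=; rewrite [X in X + _]big1 ?add0r; last by move=> k _; exact: mul0r.
  under eq_bigr do rewrite mulrBl.
  by rewrite sumrB !sum_ind.
split.
- case=> hD hR.
  have Hex := fun r => (key (hK r) (hpi r) (fun j => (a r j *m x) 0 0) (b r)).1 (hR r).
  pose tr r := proj1_sig (constructive_indefinite_description _ (Hex r)).
  have Htr : forall r, _ := fun r => proj2_sig (constructive_indefinite_description _ (Hex r)).
  exists (fun z => tr (tag z) (tagged z)); case => [[[i|r]|y]|y].
  + by rewrite E1; exact: hD i 0.
  + by rewrite E2; have [_ [_ h]] := Htr r.
  + by rewrite E3 subr_le0; case: y => r j /=; have [h _] := Htr r.
  + rewrite E4 subr_le0; case: y => r j /=; have [_ [h _]] := Htr r; exact: h.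
- case=> t Ht; split.
  + by move=> i j; rewrite ord1; have := Ht (inl (inl (inl i))); rewrite E1.
  move=> r; apply: ((key (hK r) (hpi r) (fun j => (a r j *m x) 0 0) (b r)).2).
  exists (fun j => t (Tagged (fun r => 'I_(K r)) j)); split; [|split].
  + by move=> j; have := Ht (inl (inr (Tagged (fun r => 'I_(K r)) j))); rewrite E3 subr_le0.
  + by move=> j; have := Ht (inr (Tagged (fun r => 'I_(K r)) j)); rewrite E4 subr_le0.
  + by have := Ht (inl (inl (inr r))); rewrite E2.
Qed.
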